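(* Let $m,n$ be positive integers and $\alpha\in\mathbb{R}$. Consider the scalar equation $\partial_tu+u^m\partial_xu^n=0$, rewritten as $\partial_tu+\partial_x(u^{m+n})-u^n\partial_x(u^m)=0$, with entropy pair $U(u)=u^2/2$, $F(u)=\frac{n}{m+n+1}u^{m+n+1}$, and the semi-discretization on a uniform grid of spacing $\Delta x$ $$\partial_tu_i+\frac{f^{\mathrm{num}}_{i+1/2}-f^{\mathrm{num}}_{i-1/2}}{\Delta x}-\alpha\frac{h^{\mathrm{num}}_{i+1/2}[\![u^m]\!]_{i+1/2}+h^{\mathrm{num}}_{i-1/2}[\![u^m]\!]_{i-1/2}}{2\Delta x}-(1-\alpha)\frac{u_i^n[\![u^m]\!]_{i+1/2}+u_i^n[\![u^m]\!]_{i-1/2}}{2\Delta x}=0,$$ where $h^{\mathrm{num}}\colon\mathbb{R}^2\to\mathbb{R}$ is any symmetric function with $h^{\mathrm{num}}(u,u)=u^n$, subscripts $i+1/2$ mean evaluation at $(u_-,u_+)=(u_i,u_{i+1})$, and $$f^{\mathrm{num}}(u_-,u_+)=\frac{m+1}{m+n+1}\sum_{k=0}^{m+n}u_+^{m+n-k}u_-^k-\alpha\{\{u\}\}h^{\mathrm{num}}\sum_{k=0}^{m-1}u_+^{m-1-k}u_-^k-(1-\alpha)\{\{u^{n+1}\}\}\sum_{k=0}^{m-1}u_+^{m-1-k}u_-^k.$$ Then this semi-discretization is entropy-conservative for $U=u^2/2$.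
   Context: For a function $a$ and states $u_\pm$: $\{\{a\}\}=\tfrac12(a(u_-)+a(u_+))$, $[\![a]\!]=a(u_+)-a(u_-)$. Entropy-conservative for $(U,F)$ means: there exists $F^{\mathrm{num}}\colon\mathbb{R}^2\to\mathbb{R}$ with $F^{\mathrm{num}}(u,u)=F(u)$ such that for all grid states and all $i$, $U'(u_i)\,\partial_tu_i=-\frac{1}{\Delta x}(F^{\mathrm{num}}(u_i,u_{i+1})-F^{\mathrm{num}}(u_{i-1},u_i))$, with $\partial_tu_i$ given by the scheme. *)

(* Defs.v *)
From Stdlib Require Import Reals ZArith.
From Coquelicot Require Import Coquelicot.
Open Scope R_scope.

(* jump [[g]] = g(u+) - g(u-) and mean {{g}} = (g(u-) + g(u+))/2 at (u-,u+) = (a,b) *)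
Definition jump (g : R -> R) (a b : R) : R := g b - g a.
Definition mean (g : R -> R) (a b : R) : R := (g a + g b) / 2.

(* sum_{k=0}^{N} b^(N-k) a^k  (sum_f_R0 f N = f 0 + ... + f N) *)
Definition psum (N : nat) (a b : R) : R :=
  sum_f_R0 (fun k => b ^ (N - k) * a ^ k) N.

(* numerical flux f^num(u-,u+) ; uses m >= 1 so that m-1 is the true m-1 *)
Definition fnum (m n : nat) (alpha : R) (h : R -> R -> R) (a b : R) : R :=
  INR (m + 1) / INR (m + n + 1) * psum (m + n) a b
  - alpha * mean (fun v => v) a b * h a b * psum (m - 1) a b
  - (1 - alpha) * mean (fun v => v ^ (n + 1)) a b * psum (m - 1) a b.

Definition scheme_rhs (m n : nat) (alpha : R) (h : R -> R -> R) (dx : R)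
    (u : Z -> R) (i : Z) : R :=
  let um := fun v => v ^ m in
  let ul := u (i - 1)%Z in
  let uc := u i in
  let ur := u (i + 1)%Z in
  - (fnum m n alpha h uc ur - fnum m n alpha h ul uc) / dx
  + alpha * (h uc ur * jump um uc ur + h ul uc * jump um ul uc) / (2 * dx)
  + (1 - alpha) * (uc ^ n * jump um uc ur + uc ^ n * jump um ul uc) / (2 * dx).

Definition entropy_conservative (U F : R -> R) (dudt : (Z -> R) -> Z -> R) (dx : R)
  : Prop :=
  exists Fnum : R -> R -> R,
    (forall v, Fnum v v = F v) /\
    forall (u : Z -> R) (i : Z),
      Derive U (u i) * dudt u i
      = - (1 / dx) * (Fnum (u i) (u (i + 1)%Z) - Fnum (u (i - 1)%Z) (u i)).

(* Main.v *)
Require Import Defs.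
From Stdlib Require Import Reals ZArith Lra Lia.
From Coquelicot Require Import Coquelicot.
Open Scope R_scope.

Lemma psum_tel (k : nat) (a b : R) :
  (b - a) * psum k a b = b ^ (S k) - a ^ (S k).
Proof.
  induction k as [|k IH].
  - unfold psum; simpl; ring.
  - assert (E : psum (S k) a b = b * psum k a b + a ^ (S k)).
    { unfold psum. rewrite tech5. f_equal.
      - rewrite scal_sum. apply sum_eq. intros j Hj.
        replace (S k - j)%nat with (S (k - j)) by lia. simpl. ring.
      - rewrite Nat.sub_diag. simpl. ring. }
    rewrite E. replace ((b - a) * (b * psum k a b + a ^ S k))
      with (b * ((b - a) * psum k a b) + (b - a) * a ^ S k) by ring.
    rewrite IH. simpl. ring.
Qed.

Lemma fnum_tel (m n : nat) (alpha : R) (h : R -> R -> R) (a b : R) :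
  (0 < m)%nat ->
  (b - a) * fnum m n alpha h a b =
  INR (m + 1) / INR (m + n + 1) * (b ^ (m + n + 1) - a ^ (m + n + 1))
  - alpha * ((a + b) / 2) * h a b * (b ^ m - a ^ m)
  - (1 - alpha) * ((a ^ (n + 1) + b ^ (n + 1)) / 2) * (b ^ m - a ^ m).
Proof.
  intros Hm. unfold fnum, mean.
  assert (H1 := psum_tel (m + n) a b).
  assert (H2 := psum_tel (m - 1) a b).
  replace (S (m + n)) with (m + n + 1)%nat in H1 by lia.
  replace (S (m - 1)) with m in H2 by lia.
  rewrite <- H1, <- H2. ring.
Qed.

Theorem mainTheorem8 (m n : nat) (alpha dx : R) (h : R -> R -> R) :
  (0 < m)%nat -> (0 < n)%nat -> 0 < dx ->
  (forall a b, h a b = h b a) ->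
  (forall a, h a a = a ^ n) ->
  entropy_conservative (fun v => v ^ 2 / 2)
    (fun v => INR n / INR (m + n + 1) * v ^ (m + n + 1))
    (scheme_rhs m n alpha h dx) dx.
Proof.
  intros Hm Hn Hdx Hsym Hdiag.
  set (NN := INR (m + n + 1)).
  assert (HN : NN <> 0) by (unfold NN; apply not_0_INR; lia).
  exists (fun a b => - (INR (m + 1) / NN) * a ^ (m + n + 1)
     + a * fnum m n alpha h a b
     - alpha * a * h a b * (b ^ m - a ^ m) / 2
     - (1 - alpha) * a ^ (n + 1) * (b ^ m - a ^ m) / 2).
  split.
  - intros v. unfold fnum, mean, psum.
    rewrite Hdiag.
    assert (Hs : forall k, sum_f_R0 (fun j => v ^ (k - j) * v ^ j) k = INR (S k) * v ^ k).
    { intros k. transitivity (sum_f_R0 (fun _ => v ^ k) k).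
      - apply sum_eq. intros j Hj. rewrite <- pow_add. f_equal. lia.
      - clear. generalize (v ^ k). intro x. induction k as [|k IH]; [simpl; ring|].
        rewrite tech5, IH, (S_INR (S k)). ring. }

    rewrite (Hs (m + n)%nat), (Hs (m - 1)%nat).
    replace (S (m + n)) with (m + n + 1)%nat by lia.
    replace (S (m - 1)) with m by lia.
    fold NN.
    assert (E1 : v ^ (m + n + 1) = v * v ^ (m + n)) by (rewrite pow_add; simpl; ring).
    assert (E2 : v ^ (m + n) = v ^ (m - 1) * v ^ (n + 1)).
    { rewrite <- pow_add. f_equal. lia. }
    assert (E3 : v ^ (n + 1) = v * v ^ n) by (rewrite pow_add; simpl; ring).
    assert (E4 : INR (m + 1) = INR m + 1) by (rewrite plus_INR; simpl; ring).
    assert (E5 : NN = INR m + INR n + 1) by (unfold NN; rewrite !plus_INR; simpl; ring).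
    rewrite E1, E2, E3, E4 in *. rewrite E5 in *. field. exact HN.
  - intros u i.
    assert (HD : Derive (fun v => v ^ 2 / 2) (u i) = u i).
    { apply is_derive_unique. auto_derive; auto. field. }
    rewrite HD. unfold scheme_rhs, jump.
    set (a := u (i - 1)%Z). set (c := u i). set (b := u (i + 1)%Z).
    assert (L := fnum_tel m n alpha h a c Hm).
    fold NN in L.
    set (F0 := fnum m n alpha h a c) in *.
    set (F1 := fnum m n alpha h c b).
    rewrite !pow_add in *.
    set (Rk := INR (m + 1) / NN * (c ^ m * c ^ n * c ^ 1 - a ^ m * a ^ n * a ^ 1) -
      alpha * ((a + c) / 2) * h a c * (c ^ m - a ^ m) -
      (1 - alpha) * ((a ^ n * a ^ 1 + c ^ n * c ^ 1) / 2) * (c ^ m - a ^ m)) in L.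
    assert (HRk : Rk = Rk) by reflexivity. unfold Rk at 2 in HRk. clearbody Rk F0 F1 a b c NN. apply Rminus_diag_uniq.
    transitivity ((1 / dx) * ((c - a) * F0 - Rk)).
    - rewrite HRk. clear HRk L.
      generalize (a ^ m) (a ^ n) (b ^ m) (c ^ m) (c ^ n) (INR (m + 1)) (h a c) (h c b).
      intros. simpl. field. split; lra.
    - rewrite L. ring.
Qed.
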